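(* Let $t\ge1$, $F=\mathbb{F}_{2^t}$, $A\subseteq F$ with $|A|=n\le 2^t$, and let $k$ satisfy $r=n-k\ge 2$. Let $\alpha^*\in A$, choose $z_1,\dots,z_t\in F$ such that $\beta_i:=\alpha^*-z_i$ ($i=1,\dots,t$) form a basis of $F$ over $\mathbb{F}_2$, and set $g_i(x)=\beta_i(x-z_i)$. Then the check polynomials $g_1,\dots,g_t$ yield a linear repair scheme over $\mathbb{F}_2$ for the codeword symbol $f(\alpha^* )$ of the Reed-Solomon code $\mathrm{RS}(A,k)$ with repair bandwidth at most $(n-1)(t-1)$ bits. Moreover, when $n=|F|=2^t$ and $r=2$, this repair bandwidth is optimal, i.e. no linear repair scheme over $\mathbb{F}_2$ for a single erased symbol has bandwidth smaller than $(n-1)(t-1)$ bits.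
   Context: $\mathrm{RS}(A,k)=\{(f(\alpha))_{\alpha\in A} : f\in F[x],\ \deg f<k\}$, with $f(\alpha)$ stored at node $\alpha$. Every polynomial $g\in F[x]$ of degree at most $r-1$ gives a dual codeword (a check), i.e. $\sum_{\alpha\in A}\lambda_\alpha g(\alpha)f(\alpha)=0$ for fixed nonzero multipliers $\lambda_\alpha$. Given checks $g_1,\dots,g_t$ of degree at most $r-1$ with $\mathrm{rank}_{\mathbb{F}_2}\{g_i(\alpha^* )\}_i=t$, one obtains a linear repair scheme over $\mathbb{F}_2$: applying the trace $\mathrm{Tr}_{F/\mathbb{F}_2}$ to the check equations, the replacement node recovers the $t$ independent traces $\mathrm{Tr}(\lambda_{\alpha^*}g_i(\alpha^* )f(\alpha^* ))$ by downloading from node $\alpha\ne\alpha^*$ exactly $b_\alpha=\mathrm{rank}_{\mathbb{F}_2}\{g_1(\alpha),\dots,g_t(\alpha)\}$ sub-symbols; the repair bandwidth is $\sum_{\alpha\ne\alpha^*}b_\alpha$ sub-symbols. In general a linear repair scheme over $\mathbb{F}_2$ is one where each node sends $\mathbb{F}_2$-linear functions of its symbol and $f(\alpha^* )$ is recovered $\mathbb{F}_2$-linearly; its bandwidth is the total number of bits downloaded. *)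

(* Defs.v *)
From HB Require Import structures.
From mathcomp Require Import all_boot all_order all_algebra all_field.
Set Implicit Arguments. Unset Strict Implicit. Unset Printing Implicit Defensive.
Import GRing.Theory.
Local Open Scope ring_scope.

(* F_2-linear independence of the subfamily (v i)_{i in S} of elements of F:
   no nonempty subfamily of it sums to 0 (scalars over F_2 are 0/1). *)
Definition F2indep (F : finFieldType) (m : nat) (v : 'I_m -> F) (S : {set 'I_m}) : bool :=
  [forall T : {set 'I_m}, (T \subset S) ==> (\sum_(i in T) v i == 0) ==> (T == set0)].

Definition F2rank (F : finFieldType) (m : nat) (v : 'I_m -> F) : nat :=
  \max_(S : {set 'I_m} | F2indep v S) #|S|.

Definition F2basis (F : finFieldType) (m : nat) (v : 'I_m -> F) : Prop :=
  F2indep v setT /\ forall x : F, exists S : {set 'I_m}, x = \sum_(i in S) v i.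

(* A linear repair scheme over F_2 for node astar of RS(A,k) = {(f(a))_{a in A} : deg f < k}.
   Node a (a in A, a <> astar) sends rs_b a bits, the j-th being the F_2-linear
   (= additive) function rs_q a j of its symbol f(a); the replacement node recovers
   f(astar) by the F_2-linear (= additive) map rs_rec from the downloaded bits.
   Bits are elements of 'F_2; downloads of nodes outside A \ {astar} are forced to 0. *)
Unset Implicit Arguments.
Record lin_repair_scheme (F : finFieldType) (A : {set F}) (k : nat) (astar : F) :=
  LinRepair {
    rs_b : F -> nat;
    rs_q : forall a : F, 'I_(rs_b a) -> F -> 'F_2;
    rs_rec : (forall a : F, 'I_(rs_b a) -> 'F_2) -> F;
    rs_q_lin : forall a j x y, rs_q a j (x + y) = rs_q a j x + rs_q a j y;
    rs_rec_lin : forall u v : (forall a : F, 'I_(rs_b a) -> 'F_2),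
        rs_rec (fun a j => u a j + v a j) = rs_rec u + rs_rec v;
    rs_correct : forall f : {poly F}, (size f <= k)%N ->
        rs_rec (fun a j => if (a \in A) && (a != astar) then rs_q a j f.[a] else 0)
        = f.[astar]
  }.

Set Implicit Arguments.
Arguments rs_b {F A k astar}.
Arguments lin_repair_scheme {F}.

Definition rs_bandwidth (F : finFieldType) (A : {set F}) (k : nat) (astar : F)
  (S : lin_repair_scheme A k astar) : nat :=
  (\sum_(a in A | a != astar) rs_b S a)%N.

(* Main.v *)
Require Import Defs.
From HB Require Import structures.
From mathcomp Require Import all_boot all_order all_algebra all_field.
From mathcomp.algebra_tactics Require Import ring.
From mathcomp Require Import zify.
From Stdlib Require Import FunctionalExtensionality.
Set Implicit Arguments. Unset Strict Implicit. Unset Printing Implicit Defensive.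
Import GRing.Theory.
Local Open Scope ring_scope.

Section Additive.
Variables (U V : zmodType) (f : U -> V).
Hypothesis fD : forall x y, f (x + y) = f x + f y.
Lemma af0 : f 0 = 0.
Proof. by apply: (addrI (f 0)); rewrite -fD !addr0. Qed.
Lemma afN x : f (- x) = - f x.
Proof. by apply/eqP; rewrite -subr_eq0 opprK -fD addNr af0. Qed.
Lemma afB x y : f (x - y) = f x - f y.
Proof. by rewrite fD afN. Qed.
Lemma af_sum (I : finType) (P : pred I) (G : I -> U) :
  f (\sum_(i | P i) G i) = \sum_(i | P i) f (G i).
Proof. by elim/big_rec2: _ => [|i y1 y2 _ <-]; rewrite ?af0 ?fD. Qed.
End Additive.

Section Char2.
Variable F : finFieldType.
Hypothesis h2 : 2 \in [pchar F].

Lemma sqrD2 (x y : F) : (x + y) ^+ 2 = x ^+ 2 + y ^+ 2.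
Proof. by rewrite sqrrD mulrn_pchar // addr0. Qed.

Lemma sqr_sum2 (I : finType) (P : pred I) (G : I -> F) :
  (\sum_(i | P i) G i) ^+ 2 = \sum_(i | P i) G i ^+ 2.
Proof. by elim/big_rec2: _ => [|i y1 y2 _ <-]; rewrite ?expr0n ?sqrD2. Qed.

Lemma sqr_inj2 (x y : F) : x ^+ 2 = y ^+ 2 -> x = y.
Proof.
move=> e; apply/eqP; rewrite -subr_eq0.
have : (x - y) ^+ 2 == 0 by rewrite sqrD2 sqrrN e addrr_pchar2.
by rewrite expf_eq0.
Qed.

Lemma sum_symdiff (m : nat) (v : 'I_m -> F) (S S' : {set 'I_m}) :
  \sum_(i in S) v i + \sum_(i in S') v i =
  \sum_(i in (S :\: S') :|: (S' :\: S)) v i.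
Proof.
rewrite (big_setID S') [X in _ + X = _](big_setID S) [RHS](big_setID S).
have -> : ((S :\: S') :|: (S' :\: S)) :&: S = S :\: S'.
  by apply/setP=> i; rewrite !inE; case: (i \in S); case: (i \in S').
have -> : ((S :\: S') :|: (S' :\: S)) :\: S = S' :\: S.
  by apply/setP=> i; rewrite !inE; case: (i \in S); case: (i \in S').
rewrite /= setIC.
by rewrite addrACA addrr_pchar2 // add0r.
Qed.
End Char2.


Section Coord.
Variable F : finFieldType.
Hypothesis h2 : 2 \in [pchar F].
Variables (t : nat) (be : 'I_t -> F).
Hypothesis hb : F2basis be.

Definition CS (x : F) : {set 'I_t} :=
  odflt set0 [pick S : {set 'I_t} | x == \sum_(i in S) be i].

Lemma CS_sum x : x = \sum_(i in CS x) be i.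
Proof.
rewrite /CS; case: pickP => [S /eqP //| H].
by case: (hb.2 x) => S e; move: (H S); rewrite e eqxx.
Qed.

Lemma sum_inj (S S' : {set 'I_t}) :
  \sum_(i in S) be i = \sum_(i in S') be i -> S = S'.
Proof.
move=> e.
have hD : \sum_(i in (S :\: S') :|: (S' :\: S)) be i = 0.
  by rewrite -sum_symdiff // e addrr_pchar2.
have := hb.1; move/forallP/(_ ((S :\: S') :|: (S' :\: S))).
rewrite subsetT hD eqxx /= => /eqP D0.
apply/setP=> i; apply/idP/idP => Hi.
  apply/negPn/negP=> Hi'.
  have : i \in ((S :\: S') :|: (S' :\: S)) by rewrite !inE Hi Hi'.
  by rewrite D0 inE.
apply/negPn/negP=> Hi'.
have : i \in ((S :\: S') :|: (S' :\: S)) by rewrite !inE Hi Hi'.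
by rewrite D0 inE.
Qed.

Lemma CS_add x y : CS (x + y) = (CS x :\: CS y) :|: (CS y :\: CS x).
Proof. by apply: sum_inj; rewrite -sum_symdiff // -!CS_sum. Qed.

Definition phi (d : 'I_t) (x : F) : 'F_2 := (d \in CS x)%:R.

Lemma phiD d x y : phi d (x + y) = phi d x + phi d y.
Proof.
rewrite /phi CS_add !inE.
case: (d \in CS x); case: (d \in CS y) => //=.
  by rewrite addrr_pchar2 // pchar_Fp.
- by rewrite addr0.
- by rewrite add0r.
- by rewrite addr0.
Qed.

Lemma phi_be d : phi d (be d) = 1.
Proof.
rewrite /phi.
have -> : CS (be d) = [set d].
  by apply: sum_inj; rewrite big_set1 -CS_sum.
by rewrite inE eqxx.
Qed.
End Coord.


Section Lagrange.
Variables (F : finFieldType) (A : {set F}).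

Definition lam (a : F) : F := (\prod_(b in A :\ a) (a - b))^-1.
Definition Pp (a : F) : {poly F} := \prod_(b in A :\ a) ('X - b%:P).

Lemma size_Pp a : size (Pp a) = #|A :\ a|.+1.
Proof. by rewrite /Pp -big_enum size_prod_XsubC -cardE. Qed.

Lemma coef_Pp a : (Pp a)`_(#|A :\ a|) = 1.
Proof.
have := lead_coef_prod_XsubC (enum (A :\ a)) xpredT id.
by rewrite big_enum /= -/(Pp a) lead_coefE size_Pp.
Qed.

Lemma horner_Pp a c : (Pp a).[c] = \prod_(b in A :\ a) (c - b).
Proof.
rewrite /Pp horner_prod; apply: eq_bigr => b _; exact: hornerXsubC.
Qed.

Lemma check_id (h : {poly F}) : (size h <= #|A|.-1)%N ->
  \sum_(a in A) lam a * h.[a] = 0.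
Proof.
move=> hs.
pose L := \sum_(a in A) (lam a * h.[a]) *: Pp a.
have hL : forall c, c \in A -> L.[c] = h.[c].
  move=> c cA; rewrite /L horner_sum (bigD1 c) //= big1 ?addr0.
    rewrite hornerZ horner_Pp /lam mulrAC mulVf ?mul1r //.
    apply/prodf_neq0 => b; rewrite !inE => /andP[bc _].
    by rewrite subr_eq0 eq_sym.
  move=> a /andP[aA ac]; rewrite hornerZ horner_Pp (bigD1 c) /=.
    by rewrite subrr mul0r mulr0.
  by rewrite !inE eq_sym ac cA.
have szA : forall a, a \in A -> #|A :\ a| = #|A|.-1.
  by move=> a aA; rewrite (cardsD1 a A) aA.
have hcoef : forall j, (#|A| <= j)%N -> L`_j = 0.
  move=> j hj; rewrite /L coef_sum big1 // => a aA.
  rewrite coefZ; have Hs : (size (Pp a) <= j)%N.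
    by rewrite size_Pp szA // prednK ?(leq_trans _ hj) //; apply/card_gt0P; exists a.
  by rewrite (leq_sizeP _ _ Hs j (leqnn j)) mulr0.
have hLh : h = L.
  apply/eqP; rewrite -subr_eq0; apply/negPn/negP => nz.
  have := max_poly_roots nz _ (enum_uniq (mem A)).
  have -> : all (root (h - L)) (enum A).
    by apply/allP => c; rewrite mem_enum => cA; rewrite /root hornerD hornerN hL // subrr.
  move=> /(_ isT); rewrite -cardE; apply/negP; rewrite -leqNgt.
  apply/leq_sizeP => j0 hj0; rewrite coefB hcoef // subr0.
  move: j0 hj0.
  apply/leq_sizeP; apply: (leq_trans hs); apply: leq_pred.
have := congr1 (fun p : {poly F} => p`_(#|A|.-1)) hLh; rewrite /=.
have /leq_sizeP -> // := hs.
move=> e; rewrite [RHS]e /L coef_sum; apply: eq_bigr => a aA.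
by rewrite coefZ -(szA a aA) coef_Pp mulr1.
Qed.
End Lagrange.


Section Lower.
Variables (F : finFieldType) (k : nat) (a0 : F).
Variable (S : lin_repair_scheme [set: F] k a0).
Hypothesis hk : k = (#|F| - 2)%N.

Local Notation q := (@rs_q _ _ _ _ S).

Definition K a : {set F} := [set y | [forall j, q a j y == 0]].

Lemma qD a j x y : q a j (x + y) = q a j x + q a j y.
Proof. exact: (@rs_q_lin _ _ _ _ S). Qed.

Lemma K0 a : 0 \in K a.
Proof. by rewrite inE; apply/forallP => j; rewrite (af0 (@qD a j)). Qed.

Lemma KN a y : y \in K a -> - y \in K a.
Proof.
rewrite !inE => /forallP H; apply/forallP => j.
by rewrite (afN (@qD a j)) (eqP (H j)) oppr0.
Qed.

Lemma card_K a : (#|F| <= 2 ^ rs_b S a * #|K a|)%N.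
Proof.
pose Q (y : F) : {ffun 'I_(rs_b S a) -> 'F_2} := [ffun j => q a j y].
pose rep v := odflt 0 [pick y | Q y == v].
have hrep : forall y, Q (rep (Q y)) = Q y.
  move=> y; rewrite /rep; case: pickP => [y' /eqP //| H].
  by move: (H y); rewrite eqxx.
pose hm y := (Q y, y - rep (Q y)).
have inj : injective hm.
  move=> y y' [e1 e2]; rewrite e1 in e2.
  by have := congr1 (fun z => z + rep (Q y')) e2; rewrite /= !subrK.
have sub : hm @: [set: F] \subset setX [set: {ffun 'I_(rs_b S a) -> 'F_2}] (K a).
  apply/subsetP => p /imsetP[y _ ->]; rewrite !inE /=.
  apply/forallP => j; rewrite (afB (@qD a j)).
  have := congr1 (fun v : {ffun _ -> _} => v j) (hrep y); rewrite /Q !ffunE => ->.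
  by rewrite subrr.
have := subset_leq_card sub.
rewrite card_imset // cardsT cardsX cardsT card_ffun card_Fp // card_ord.
done.
Qed.

Definition W a : {set F} := [set (a - a0) * y | y in K a].

Lemma card_W a : a != a0 -> #|W a| = #|K a|.
Proof. by move=> h; rewrite card_imset //; apply: mulfI; rewrite subr_eq0. Qed.

Lemma W0 a : 0 \in W a.
Proof. by apply/imsetP; exists 0; rewrite ?mulr0 ?K0. Qed.

Lemma Pi_const a : \prod_(b | b != a) (a - b) = \prod_(c : F | c != 0) c.
Proof.
have E : forall c : F, a - (a - c) = c by move=> c; ring.
rewrite (reindex (fun c => a - c)) /=.
  apply: eq_big => [c|c _]; last exact: E.
  have E2 : a - c - a = - c by ring.
  by rewrite -subr_eq0 E2 oppr_eq0.
by exists (fun c => a - c) => c _; rewrite E.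
Qed.

Lemma split3 (u v w : F) (X : {set F}) (f : F -> F) :
  v != u -> w != u -> w != v ->
  (forall b, (b \in X) = [|| b == u, b == v | b == w]) ->
  \prod_(b | b != u) f b = f v * f w * \prod_(b in ~: X) f b.
Proof.
move=> vu wu wv hX.
rewrite (bigD1 v) // (bigD1 w) /=; last by rewrite wu wv.
rewrite mulrA; congr (_ * _); apply: eq_bigl => b.
by rewrite inE hX; case: (b == u); case: (b == v); case: (b == w).
Qed.

Lemma rec0 : @rs_rec _ _ _ _ S (fun a j => 0) = 0.
Proof.
have := @rs_rec_lin _ _ _ _ S (fun a j => 0) (fun a j => 0).
have -> : (fun a (j : 'I_(rs_b S a)) => (0 : 'F_2) + 0) = (fun a j => 0).
  by apply: functional_extensionality_dep => a; apply: functional_extensionality => j; rewrite addr0.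
move=> h; apply: (addrI (@rs_rec _ _ _ _ S (fun a j => 0))).
by rewrite addr0 -h.
Qed.

Lemma W_disj a1 a2 x : a1 != a0 -> a2 != a0 -> a1 != a2 ->
  x \in W a1 -> x \in W a2 -> x = 0.
Proof.
move=> h10 h20 h12 /imsetP[y1 y1K ->] /imsetP[y2 y2K e].
apply/eqP; apply/negPn/negP => nz.
have y1nz : y1 != 0 by apply: contraNneq nz => ->; rewrite mulr0.
pose X : {set F} := [set a0; a1; a2].
have hX : forall b, (b \in X) = [|| b == a0, b == a1 | b == a2] by move=> b; rewrite /X !inE; case: (b == a0); case: (b == a1).
pose P := \prod_(b in ~: X) ('X - b%:P).
have hP : forall c, P.[c] = \prod_(b in ~: X) (c - b).
  by move=> c; rewrite /P horner_prod; apply: eq_bigr => b _; rewrite hornerXsubC.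
have Pnz : forall c, c \in X -> P.[c] != 0.
  move=> c cX; rewrite hP; apply/prodf_neq0 => b; rewrite inE => bX.
  by rewrite subr_eq0; apply: contraNneq bX => <-.
have Pz : forall c, c \notin X -> P.[c] = 0.
  move=> c cX; rewrite hP (bigD1 c) /=; first by rewrite subrr mul0r.
  by rewrite inE.
have P1nz : P.[a1] != 0 by apply: Pnz; rewrite hX eqxx orbT.
have P2nz : P.[a2] != 0 by apply: Pnz; rewrite hX eqxx !orbT.
have P0nz : P.[a0] != 0 by apply: Pnz; rewrite hX eqxx.
have e1 : \prod_(c : F | c != 0) c = (a1 - a0) * (a1 - a2) * P.[a1].
  rewrite -(Pi_const a1) (@split3 a1 a0 a2 X (fun b => a1 - b)) ?hP //;
    try by rewrite eq_sym.
  by move=> b; rewrite hX; case: (b == a0); case: (b == a1).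
have e2 : \prod_(c : F | c != 0) c = (a2 - a0) * (a2 - a1) * P.[a2].
  rewrite -(Pi_const a2) (@split3 a2 a0 a1 X (fun b => a2 - b)) ?hP //;
    try by rewrite eq_sym.
  by move=> b; rewrite hX; case: (b == a0); case: (b == a1); case: (b == a2).
have key : (a2 - a0) * P.[a2] = - ((a1 - a0) * P.[a1]).
  have : (a1 - a2) * ((a1 - a0) * P.[a1] + (a2 - a0) * P.[a2]) = 0.
    have -> : (a1 - a2) * ((a1 - a0) * P.[a1] + (a2 - a0) * P.[a2]) =
      (a1 - a0) * (a1 - a2) * P.[a1] - (a2 - a0) * (a2 - a1) * P.[a2] by ring.
    by rewrite -e1 -e2 subrr.
  move/eqP; rewrite mulf_eq0 subr_eq0 (negbTE h12) /= addr_eq0 => /eqP ->.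
  by rewrite opprK.
pose mu := y1 / P.[a1].
pose f := mu *: P.
have f1 : f.[a1] = y1 by rewrite hornerZ /mu divfK.
have f2 : f.[a2] = - y2.
  apply: (mulfI (_ : a2 - a0 != 0)); first by rewrite subr_eq0.
  rewrite hornerZ /mu.
  have -> : (a2 - a0) * (y1 / P.[a1] * P.[a2]) = y1 / P.[a1] * ((a2 - a0) * P.[a2]) by ring.
  rewrite key.
  have -> : y1 / P.[a1] * - ((a1 - a0) * P.[a1]) = - ((a1 - a0) * y1) * (P.[a1] / P.[a1]) by ring.
  by rewrite divff // mulr1 e mulrN.
have f0 : f.[a0] != 0.
  by rewrite hornerZ /mu mulf_neq0 // mulf_neq0 // invr_eq0.
have fK : forall a, a != a0 -> f.[a] \in K a.
  move=> a aa0.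
  case: (eqVneq a a1) => [-> | a1'].
    by rewrite f1.
  case: (eqVneq a a2) => [-> | a2'].
    by rewrite f2 KN.
  rewrite hornerZ Pz ?mulr0 ?K0 //.
  by rewrite hX (negbTE aa0) (negbTE a1') (negbTE a2').
have cX : #|X| = 3%N.
  rewrite /X setUC cardsU1 cards2 !inE.
  by rewrite negb_or h20 (eq_sym a2 a1) h12 (eq_sym a0 a1) h10.
have hsize : (size f <= k)%N.
  apply: (leq_trans (size_scale_leq _ _)).
  rewrite /P -big_enum size_prod_XsubC -cardE.
  have := cardsC X; have := max_card (mem X); rewrite cX hk.
  move=> _ h2; rewrite -h2; lia.
have := @rs_correct _ _ _ _ S f hsize.
have -> : (fun a (j : 'I_(rs_b S a)) => if (a \in [set: F]) && (a != a0)
             then q a j f.[a] else 0) = (fun a j => 0).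
  apply: functional_extensionality_dep => a; apply: functional_extensionality => j.
  case: ifP => // /andP[_ aa0].
  by have := fK a aa0; rewrite inE => /forallP/(_ j)/eqP.
rewrite rec0 => /esym f00.
by move: f0; rewrite f00 eqxx.
Qed.

Lemma lower t : #|F| = (2 ^ t)%N ->
  ((#|F| - 1) * (t - 1) <= \sum_(a in [set: F] | a != a0) rs_b S a)%N.
Proof.
move=> hF.
have hm : forall a, a != a0 -> (t <= rs_b S a + #|W a   :\ (0%R : F)|)%N.
  move=> a aa0.
  have cW : #|K a| = #|W a   :\ (0%R : F)|.+1 by rewrite -card_W // (cardsD1 (0%R : F) (W a)) W0.
  have := card_K a; rewrite cW hF.
  set b := rs_b S a; set m := #|W a   :\ (0%R : F)|.
  move=> H; rewrite leqNgt; apply/negP => lt.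
  have h1 : (m.+1 < 2 ^ m.+1)%N by apply: ltn_expl.
  have h2 : (2 ^ b * m.+1 < 2 ^ b * 2 ^ m.+1)%N by rewrite ltn_pmul2l ?expn_gt0.
  have h3 : (2 ^ (b + m.+1) <= 2 ^ t)%N by apply: leq_pexp2l => //; lia.
  rewrite expnD in h3.
  by have := leq_trans (leq_ltn_trans H h2) h3; rewrite ltnn.
have E : forall a, #|W a   :\ (0%R : F)| = (\sum_x (if x \in W a   :\ (0%R : F) then 1 else 0))%N.
  by move=> a; rewrite -sum1_card big_mkcond.
have hc : (\sum_(a in [set: F] | a != a0) #|W a   :\ (0%R : F)| <= #|F|.-1)%N.
  rewrite (eq_bigr _ (fun a _ => E a)) exchange_big /=.
  rewrite -(cardC1 (0 : F)) -sum1_card [X in (_ <= X)%N]big_mkcond /=.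
  apply: leq_sum => x _.
  case: (eqVneq x 0) => [-> | xnz].
    by rewrite big1 // => a _; rewrite !inE eqxx.
  rewrite inE xnz.
  case: (pickP (fun a => (a != a0) && (x \in W a))) => [a1 /andP[a1a0 xa1] | none].
    rewrite (bigD1 a1) /=; last by rewrite in_setT a1a0.
    rewrite !inE xnz xa1 big1 //= => a /andP[/andP[_ aa0] aa1].
    rewrite !inE xnz /=; case: ifP => // xa.
    by have := W_disj aa0 a1a0 aa1 xa xa1; move/eqP: xnz.
  rewrite big1 // => a /andP[_ aa0]; rewrite !inE xnz /=.
  by have := none a; rewrite aa0 /= => ->.
have hs : (\sum_(a in [set: F] | a != a0) t <=
           \sum_(a in [set: F] | a != a0) rs_b S a + #|F|.-1)%N.
  apply: (@leq_trans (\sum_(a in [set: F] | a != a0) (rs_b S a + #|W a   :\ (0%R : F)|))).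
    by apply: leq_sum => a /andP[_ aa0]; exact: hm.
  by rewrite big_split /= leq_add2l.
rewrite sum_nat_const in hs.
have cc : #|[pred a in [set: F] | a != a0]| = #|F|.-1.
  by rewrite -(cardC1 a0); apply: eq_card => x; rewrite !inE.
move: hs; rewrite cc subn1; move=> hs; nia.
Qed.
End Lower.


Lemma oppE n (v : {ffun 'I_n -> 'F_2}) i : (- v) i = - v i.
Proof. by rewrite ffunE. Qed.
Lemma addE n (v w : {ffun 'I_n -> 'F_2}) i : (v + w) i = v i + w i.
Proof. by rewrite ffunE. Qed.
Lemma oppF2 (b : 'F_2) : - b = b.
Proof. by rewrite oppr_pchar2 // pchar_Fp. Qed.

Section Upper.
Variables (t : nat) (ht : (1 <= t)%N) (F : finFieldType) (hF : #|F| = (2 ^ t)%N).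
Variables (A : {set F}) (k : nat) (hr : (2 <= #|A| - k)%N).
Variables (astar : F) (hastar : astar \in A) (z : 'I_t -> F).
Definition be i := astar - z i.
Hypothesis hbasis : F2basis be.

Let h2 : 2 \in [pchar F] := card_finPcharP hF (isT : prime 2).

Definition gv i a := be i * (a - z i).

Lemma gv_star i : gv i astar = be i ^+ 2.
Proof. by rewrite /gv /be expr2. Qed.

Definition T0 a := CS be (a - astar).

Lemma gvE i a : gv i a = be i * (a - astar) + be i ^+ 2.
Proof. rewrite /gv /be; ring. Qed.

Lemma T0_sum a : \sum_(i in T0 a) gv i a = 0.
Proof.
under eq_bigr do rewrite gvE.
rewrite big_split /= -mulr_suml -sqr_sum2 // /T0 -CS_sum //.
by rewrite -expr2 addrr_pchar2.
Qed.

Lemma T0_nz a : a != astar -> T0 a != set0.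
Proof.
move=> aa; apply: contraNneq aa => e.
have H := CS_sum hbasis (a - astar); rewrite -/(T0 a) e big_set0 in H.
by rewrite -subr_eq0 H.
Qed.

Lemma rank_le (v : 'I_t -> F) : (F2rank v <= t)%N.
Proof.
apply/bigmax_leqP => S _; apply: leq_trans (max_card _) _; by rewrite card_ord.
Qed.

Lemma rank_star : F2rank (fun i => gv i astar) = t.
Proof.
apply/eqP; rewrite eqn_leq rank_le /=.
have Hi : F2indep (fun i => gv i astar) [set: 'I_t].
  apply/forallP => T; apply/implyP => _; apply/implyP => /eqP e.
  have := hbasis.1; move/forallP/(_ T); rewrite subsetT /=.
  move=> /implyP; apply; apply/eqP; apply: (sqr_inj2 h2).
  rewrite sqr_sum2 // expr0n /= -[RHS]e; apply: eq_bigr => i _; by rewrite gv_star.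
have := @leq_bigmax_cond _ _ (fun S : {set 'I_t} => #|S|) _ Hi.
by rewrite cardsT card_ord.
Qed.

Lemma rank_other a : a != astar -> (F2rank (fun i => gv i a) <= t.-1)%N.
Proof.
move=> aa; apply/bigmax_leqP => S hS.
have ST : S != [set: 'I_t].
  apply: contraNneq (T0_nz aa) => eS; move: hS; rewrite eS => /forallP/(_ (T0 a)).
  by rewrite subsetT T0_sum eqxx.
have := proper_card (A:=S) (B:=[set: 'I_t]); rewrite properT ST cardsT card_ord => /(_ isT).
by move=> h; rewrite -ltnS prednK.
Qed.

Definition d0 : 'I_t := Ordinal ht.
Definition phi0 (x : F) : 'F_2 := phi be d0 x.
Lemma phi0D x y : phi0 (x + y) = phi0 x + phi0 y.
Proof. exact: (phiD h2 hbasis). Qed.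

Definition lamA := lam A.
Definition i0 a : 'I_t := odflt d0 [pick i in T0 a].

Lemma i0_in a : a != astar -> i0 a \in T0 a.
Proof.
move=> aa; rewrite /i0; case: pickP => [i -> //| none].
by have /set0Pn [i Hi] := T0_nz aa; move: (none i); rewrite Hi.
Qed.

Definition qq a (j : 'I_t.-1) (y : F) : 'F_2 := phi0 (lamA a * gv (lift (i0 a) j) a * y).
Definition cf a i (j : 'I_t.-1) : 'F_2 :=
  if i == i0 a then (lift (i0 a) j \in T0 a)%:R else (lift (i0 a) j == i)%:R.
Definition ex a (u : 'I_t.-1 -> 'F_2) i := \sum_j cf a i j * u j.

Lemma ex_true a i y : a != astar ->
  \sum_j cf a i j * qq a j y = phi0 (lamA a * gv i a * y).
Proof.
move=> aa.
pose G i' := phi0 (lamA a * gv i' a * y).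
rewrite /cf /qq -/(G _).
have [-> | ni] := eqVneq i (i0 a).
  rewrite ?eqxx.
  have -> : \sum_j (lift (i0 a) j \in T0 a)%:R * G (lift (i0 a) j) =
            \sum_(j | lift (i0 a) j \in T0 a) G (lift (i0 a) j).
    rewrite [RHS]big_mkcond /=; apply: eq_bigr => j _.
    by case: (_ \in _); rewrite ?mul1r ?mul0r.
  have hs : \sum_(i' < t | i' \in T0 a) G i' = 0.
    rewrite /G -(af_sum phi0D) -mulr_suml -mulr_sumr.
    have -> : \sum_(i' < t | i' \in T0 a) gv i' a = 0 by exact: T0_sum.
    by rewrite mulr0 mul0r (af0 phi0D).
  rewrite (bigD1_ord (i0 a)) /= in hs; last exact: i0_in.
  by move/eqP: hs; rewrite addr_eq0 => /eqP ->; rewrite oppF2.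
idtac.
have e1 : \sum_(i' < t) (i' == i)%:R * G i' = G i.
  rewrite (bigD1 i) //= eqxx mul1r big1 ?addr0 // => i' /negbTE ->.
  by rewrite mul0r.
rewrite -[RHS]e1 (bigD1_ord (i0 a)) //= eq_sym (negbTE ni) mul0r add0r.
done.
Qed.

Definition MM (x : F) : {ffun 'I_t -> 'F_2} := [ffun i => phi0 (lamA astar * gv i astar * x)].

Lemma MD x y : MM (x + y) = MM x + MM y.
Proof. by apply/ffunP => i; rewrite addE !ffunE mulrDr phi0D. Qed.

Lemma lam_nz : lamA astar != 0.
Proof.
rewrite /lamA /lam invr_eq0; apply/prodf_neq0 => b; rewrite !inE => /andP[ba _].
by rewrite subr_eq0 eq_sym.
Qed.

Lemma sqr_onto (y : F) : exists r : F, y = r ^+ 2.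
Proof.
have inj : injective (fun r : F => r ^+ 2) by move=> r r'; apply: sqr_inj2.
by have /codomP := inj_card_onto inj (leqnn _) y.
Qed.

Lemma MM_ker w : MM w = 0 -> w = 0.
Proof.
move=> Mw; apply/eqP; apply/negPn/negP => wnz.
have [r hr'] := sqr_onto (be d0 / (lamA astar * w)).
have e : be d0 = \sum_(i in CS be r) lamA astar * gv i astar * w.
  have -> : be d0 = lamA astar * w * (be d0 / (lamA astar * w)).
    by rewrite mulrC divfK // mulf_neq0 // lam_nz.
  rewrite hr' {1}(CS_sum hbasis r) sqr_sum2 // mulr_sumr; apply: eq_bigr => i _.
  by rewrite gv_star; ring.
have := phi_be h2 hbasis d0; rewrite -/(phi0 _) e (af_sum phi0D) big1.
  by move/eqP; rewrite eq_sym oner_eq0.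
by move=> i _; have := congr1 (fun v : {ffun _ -> _} => v i) Mw; rewrite !ffunE.
Qed.

Lemma MM_inj : injective MM.
Proof.
move=> x y e; apply/eqP; rewrite -subr_eq0; apply/eqP; apply: MM_ker.
by rewrite (afB MD) e subrr.
Qed.

Lemma MM_onto v : exists x, v = MM x.
Proof.
apply/codomP; apply: inj_card_onto MM_inj _ v.
by rewrite card_ffun card_Fp // card_ord hF.
Qed.

Definition Minv (v : {ffun 'I_t -> 'F_2}) : F := odflt 0 [pick x | MM x == v].

Lemma MinvK v : MM (Minv v) = v.
Proof.
rewrite /Minv; case: pickP => [x /eqP //| none].
by have [x e] := MM_onto v; move: (none x); rewrite e eqxx.
Qed.

Lemma Minv_MM x : Minv (MM x) = x.
Proof. by apply: MM_inj; rewrite MinvK. Qed.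

Lemma MinvD v w : Minv (v + w) = Minv v + Minv w.
Proof. by apply: MM_inj; rewrite MD !MinvK. Qed.

Definition ss (u : forall a : F, 'I_t.-1 -> 'F_2) : {ffun 'I_t -> 'F_2} :=
  [ffun i => \sum_(a in A | a != astar) ex a (u a) i].

Definition rec (u : forall a : F, 'I_t.-1 -> 'F_2) : F := Minv (- ss u).

Lemma recD (u v : forall a : F, 'I_t.-1 -> 'F_2) :
  rec (fun a j => u a j + v a j) = rec u + rec v.
Proof.
rewrite /rec -MinvD -opprD; congr (Minv (- _)).
apply/ffunP => i; rewrite addE !ffunE -big_split /=; apply: eq_bigr => a _.
by rewrite /ex -big_split /=; apply: eq_bigr => j _; rewrite mulrDr.
Qed.

Lemma qqD a j x y : qq a j (x + y) = qq a j x + qq a j y.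
Proof. by rewrite /qq mulrDr phi0D. Qed.

Lemma rec_correct (f : {poly F}) : (size f <= k)%N ->
  rec (fun a j => if (a \in A) && (a != astar) then qq a j f.[a] else 0) = f.[astar].
Proof.
move=> hf; rewrite /rec.
suff -> : ss (fun a j => if (a \in A) && (a != astar) then qq a j f.[a] else 0)
          = - MM f.[astar] by rewrite opprK Minv_MM.
apply/ffunP => i; rewrite oppE !ffunE.
rewrite (eq_bigr (fun a => phi0 (lamA a * gv i a * f.[a]))); last first.
  move=> a /andP[aA aa]; rewrite /ex aA aa /=; exact: ex_true.
pose h := (be i *: ('X - (z i)%:P)) * f.
have hh : forall a, h.[a] = gv i a * f.[a].
  by move=> a; rewrite /h hornerM hornerZ hornerXsubC.
have hs : (size h <= #|A|.-1)%N.
  apply: leq_trans (size_mul_leq _ _) _.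
  apply: leq_trans (_ : ((2 + k).-1 <= _)%N).
    rewrite -!subn1 leq_sub2r // leq_add //.
    by apply: leq_trans (size_scale_leq _ _) _; rewrite size_XsubC.
  by move: hr; lia.
have := check_id hs; rewrite (bigD1 astar) //= => /eqP; rewrite addrC addr_eq0 => /eqP e.
rewrite -(af_sum phi0D).
have -> : \sum_(a in A | a != astar) lamA a * gv i a * f.[a] =
          \sum_(a in A | a != astar) lam A a * h.[a].
  by apply: eq_bigr => a _; rewrite hh mulrA.
by rewrite e hh mulrA (afN phi0D).
Qed.

Lemma card_pred_star : #|[pred a in A | a != astar]| = (#|A| - 1)%N.
Proof.
have -> : #|[pred a in A | a != astar]| = #|A :\ astar|.
  by apply: eq_card => x; rewrite !inE andbC.
by rewrite (cardsD1 astar A) hastar add1n subn1.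
Qed.

Lemma upper_parts :
  let g := fun i : 'I_t => (astar - z i) *: ('X - (z i)%:P) in
  (forall i, (size (g i) <= #|A| - k)%N) /\
  F2rank (fun i => (g i).[astar]) = t /\
  (\sum_(a in A | a != astar) F2rank (fun i => (g i).[a]) <= (#|A| - 1) * (t - 1))%N /\
  (exists S : lin_repair_scheme A k astar, (rs_bandwidth S <= (#|A| - 1) * (t - 1))%N).
Proof.
move=> g.
have gE : forall i a, (g i).[a] = gv i a by move=> i a; rewrite /g hornerZ hornerXsubC.
have gF : forall a, (fun i => (g i).[a]) = (fun i => gv i a).
  by move=> a; apply: functional_extensionality => i; exact: gE.
have cs : (\sum_(a in A | a != astar) t.-1 = (#|A| - 1) * (t - 1))%N.
  rewrite sum_nat_const; congr (_ * _)%N; [rewrite -card_pred_star; exact: eq_card | by rewrite subn1].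
split.
  by move=> i; apply: leq_trans (size_scale_leq _ _) _; rewrite size_XsubC.
split; first by rewrite gF rank_star.
split.
  rewrite -cs; apply: leq_sum => a /andP[_ aa]; rewrite gF; exact: rank_other.
exists (@LinRepair F A k astar (fun _ => t.-1) qq rec qqD recD rec_correct).
by rewrite /rs_bandwidth /= cs.
Qed.
End Upper.

Unset Implicit Arguments. Set Strict Implicit. Set Printing Implicit Defensive.

Theorem theorem2 (t : nat) (ht : (1 <= t)%N) (F : finFieldType) (hF : #|F| = (2 ^ t)%N)
  (A : {set F}) (k : nat) (hr : (2 <= #|A| - k)%N)
  (astar : F) (hastar : astar \in A) (z : 'I_t -> F)
  (hbasis : F2basis (fun i => astar - z i)) :
  let g := fun i : 'I_t => (astar - z i) *: ('X - (z i)%:P) in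
  (* the g_i are checks: degree at most r - 1 *)
  (forall i, (size (g i) <= #|A| - k)%N) /\
  (* rank_{F_2} {g_i(astar)} = t *)
  F2rank (fun i => (g i).[astar]) = t /\
  (* bandwidth of the trace repair scheme built from the g_i *)
  (\sum_(a in A | a != astar) F2rank (fun i => (g i).[a]) <= (#|A| - 1) * (t - 1))%N /\
  (* hence a linear repair scheme over F_2 for astar with bandwidth <= (n-1)(t-1) *)
  (exists S : lin_repair_scheme A k astar, (rs_bandwidth S <= (#|A| - 1) * (t - 1))%N) /\
  (* optimality when n = 2^t and r = 2 *)
  (#|A| = (2 ^ t)%N -> (#|A| - k = 2)%N ->
     forall a0 : F, a0 \in A -> forall S : lin_repair_scheme A k a0,
       ((#|A| - 1) * (t - 1) <= rs_bandwidth S)%N).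
Proof.
move=> g.
have U := upper_parts ht hF hr hastar hbasis.
have [p1 [p2 [p3 p4]]] := U.
split; first exact: p1.
split; first exact: p2.
split; first exact: p3.
split; first exact: p4.
move=> hA hk a0 a0A S.
have AT : A = [set: F].
  by apply/eqP; rewrite eqEcard subsetT cardsT hA hF leqnn.
subst A.
rewrite /rs_bandwidth cardsT.
apply: (lower S _ hF).
move: hk; rewrite cardsT hF; lia.
Qed.
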